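(* Let $k\to A$ be a homomorphism of noetherian rings and $M_1,M_2$ finitely generated $A$-modules, and let $\widetilde D:\mathcal J^N(M_1/k)\to M_2$ be an $A$-linear map for some $N\in\mathbb N_0$. (1) If $\operatorname{ann}(M_2)=I$, there is some $K\in\mathbb N$ such that $\widetilde D$ factors over a map $\widetilde{D'}:\mathcal J^N((M_1/I^KM_1)/k)\to M_2$ (through the natural surjection $\mathcal J^N(M_1/k)\to\mathcal J^N((M_1/I^KM_1)/k)$). (2) If $\operatorname{ann}(M_1)=I$, there is some $K\in\mathbb N$ such that the image of $\widetilde D$ is a submodule annihilated by $I^K$.
   Context: For a ring homomorphism $k\to A$ and an $A$-module $M$, $I_{A/k}=\ker(A\otimes_kA\to A)$ and $\mathcal J^N(M/k)=(A\otimes_kM)/I_{A/k}^{N+1}(A\otimes_kM)$; ''$A$-linear'' refers to the $A$-module structure of $\mathcal J^N(M/k)$ via the first factor $a\mapsto a\otimes1$. *)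

(* Defs.v *)
From HB Require Import structures.
From mathcomp Require Import all_boot all_order all_algebra.
Set Implicit Arguments. Unset Strict Implicit. Unset Printing Implicit Defensive.
Import GRing.Theory.
Local Open Scope ring_scope.

Section Alg.
Variable R : comPzRingType.

Definition is_ideal (I : R -> Prop) : Prop :=
  [/\ I 0, (forall x y, I x -> I y -> I (x + y)) & (forall a x, I x -> I (a * x))].

Definition noetherian_ring : Prop :=
  forall I : R -> Prop, is_ideal I ->
    exists s : seq R, (forall y, y \in s -> I y) /\
      forall x, I x <-> exists c : 'I_(size s) -> R, x = \sum_(i < size s) c i * s`_i.

Definition ideal_pow (I : R -> Prop) (K : nat) : R -> Prop := fun x =>
  exists s : seq (seq R),
    (forall t, t \in s -> size t = K /\ forall a, a \in t -> I a) /\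
    x = \sum_(t <- s) \prod_(a <- t) a.

Variable M : lmodType R.

Definition fin_gen_module : Prop :=
  exists s : seq M, forall m, exists c : 'I_(size s) -> R,
    m = \sum_(i < size s) c i *: s`_i.

Definition ann : R -> Prop := fun a => forall m : M, a *: m = 0.

Definition ideal_mul_mod (J : R -> Prop) : M -> Prop := fun m =>
  exists s : seq (R * M), (forall p, p \in s -> J p.1) /\
    m = \sum_(p <- s) p.1 *: p.2.
End Alg.

(* An A-linear map  Dt : A (x)_k M -> P  (A acting on the first factor) is the
   same as a function D : A -> M -> P, D a m = Dt (a (x) m), which is
   biadditive, k-balanced and A-linear in the first argument. *)
Section Jets.
Variables (k A : comPzRingType) (phi : {rmorphism k -> A}).

Definition tensor_lin (M P : lmodType A) (D : A -> M -> P) : Prop :=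
  [/\ (forall a a' m, D (a + a') m = D a m + D a' m),
      (forall a m m', D a (m + m') = D a m + D a m'),
      (forall (l : k) a m, D (a * phi l) m = D a (phi l *: m)) &
      (forall b a m, D (b * a) m = b *: D a m)].

(* An element of A (x)_k A represented by a finite list of pure tensors
   x (x) y; I_{A/k} = ker(A (x)_k A -> A) consists of those with sum x*y = 0. *)
Definition in_IAk (t : seq (A * A)) : bool := \sum_(p <- t) p.1 * p.2 == 0.

Definition tmul (s t : seq (A * A)) : seq (A * A) :=
  [seq (p.1 * q.1, p.2 * q.2) | p <- s, q <- t].
Definition tprod (ts : seq (seq (A * A))) : seq (A * A) :=
  foldr tmul [:: (1, 1)] ts.

(* Dt (u . (b (x) m)) for u in A (x)_k A acting on A (x)_k M by
   (x (x) y).(b (x) m) = x b (x) y m. *)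
Definition tact (M P : lmodType A) (D : A -> M -> P) (u : seq (A * A)) b m : P :=
  \sum_(p <- u) D (p.1 * b) (p.2 *: m).

(* D : A -> M -> P represents an A-linear map
   J^N(M/k) = (A (x)_k M) / I^{N+1} (A (x)_k M)  -> P :
   it is A-linear on A (x)_k M and vanishes on I^{N+1}(A (x)_k M), which is
   spanned by the u.(b (x) m) with u a product of N+1 elements of I_{A/k}. *)
Definition jet_map (N : nat) (M P : lmodType A) (D : A -> M -> P) : Prop :=
  tensor_lin D /\
  forall ts : seq (seq (A * A)), size ts = N.+1 -> all in_IAk ts ->
    forall b m, tact D (tprod ts) b m = 0.

Definition jet_image (M P : lmodType A) (D : A -> M -> P) : P -> Prop :=
  fun y => exists s : seq (A * M), y = \sum_(p <- s) D p.1 p.2.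
End Jets.

(* Main.v *)
Require Import Defs.
From HB Require Import structures.
From mathcomp Require Import all_boot all_order all_algebra.
Import GRing.Theory.
Local Open Scope ring_scope.

Section Helpers.
Variables (k A : comPzRingType) (phi : {rmorphism k -> A}).
Variables (M1 M2 : lmodType A) (D : A -> M1 -> M2).
Hypothesis TL : tensor_lin phi D.

Definition fx (x : A) : seq (A * A) := [:: (x, 1); (-1, x)].

Lemma D_add a m m' : D a (m + m') = D a m + D a m'.
Proof. by case: TL. Qed.

Lemma D_0 a : D a 0 = 0.
Proof.
have := D_add a 0 0; rewrite addr0 => /eqP.
by rewrite -subr_eq0 opprD addrA subrr add0r oppr_eq0 => /eqP.
Qed.

Lemma D_scal b a m : D (b * a) m = b *: D a m.
Proof. by case: TL. Qed.

Lemma D_sum (I : Type) (r : seq I) a (F : I -> M1) :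
  D a (\sum_(i <- r) F i) = \sum_(i <- r) D a (F i).
Proof.
elim: r => [|i r IH]; first by rewrite !big_nil D_0.
by rewrite !big_cons D_add IH.
Qed.

Lemma tact_cat (u v : seq (A * A)) b m :
  tact D (u ++ v) b m = tact D u b m + tact D v b m.
Proof. by rewrite /tact big_cat. Qed.

Lemma tprod_cons x xs :
  tprod (fx x :: map fx xs) =
  [seq (x * q.1, 1 * q.2) | q <- tprod (map fx xs)] ++
  ([seq (-1 * q.1, x * q.2) | q <- tprod (map fx xs)] ++ [::]).
Proof. by []. Qed.

Lemma L2 (xs : seq A) b m :
  (forall x, x \in xs -> forall v : M1, x *: v = 0) ->
  tact D (tprod (map fx xs)) b m = D ((\prod_(x <- xs) x) * b) m.
Proof.
elim: xs b => [|x xs IH] b H.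
  by rewrite /tact /= big_cons big_nil addr0 scale1r big_nil.
rewrite tprod_cons !tact_cat /tact big_nil addr0 !big_map.
have -> : \sum_(j <- tprod [seq fx i | i <- xs]) D (-1 * j.1 * b) ((x * j.2) *: m) = 0.
  apply: big1 => q _.
  by rewrite mulrC -scalerA H ?mem_head // D_0.
rewrite addr0.
have -> : \sum_(j <- tprod [seq fx i | i <- xs]) D (x * j.1 * b) ((1 * j.2) *: m)
  = tact D (tprod (map fx xs)) (x * b) m.
  by rewrite /tact; apply: eq_bigr => q _; rewrite mul1r mulrCA mulrA.
rewrite IH; last by move=> y hy; apply: H; rewrite in_cons hy orbT.
by rewrite big_cons mulrCA mulrA.
Qed.

Lemma L1 (xs : seq A) b m :
  (forall x, x \in xs -> forall v : M2, x *: v = 0) ->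
  tact D (tprod (map fx xs)) b m = D ((-1) ^+ size xs * b) ((\prod_(x <- xs) x) *: m).
Proof.
elim: xs b m => [|x xs IH] b m H.
  by rewrite /tact /= big_cons big_nil addr0 scale1r big_nil scale1r mul1r.
rewrite tprod_cons !tact_cat /tact big_nil addr0 !big_map.
have -> : \sum_(j <- tprod [seq fx i | i <- xs]) D (x * j.1 * b) ((1 * j.2) *: m) = 0.
  apply: big1 => q _.
  by rewrite -mulrA D_scal H ?mem_head.
rewrite add0r.
have -> : \sum_(j <- tprod [seq fx i | i <- xs]) D (-1 * j.1 * b) ((x * j.2) *: m)
  = tact D (tprod (map fx xs)) (- b) (x *: m).
  rewrite /tact; apply: eq_bigr => q _.
  by rewrite mulN1r mulNr mulrN scalerA [x * _]mulrC.
rewrite IH; last by move=> y hy; apply: H; rewrite in_cons hy orbT.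
by rewrite big_cons scalerA /= exprS mulrN mulN1r mulNr [x * _]mulrC.
Qed.

Lemma fx_IAk x : in_IAk (fx x).
Proof.
by rewrite /in_IAk /fx !big_cons big_nil /= mulr1 mulN1r addr0 subrr.
Qed.

Lemma all_fx (xs : seq A) : all (@in_IAk A) (map fx xs).
Proof. by elim: xs => //= x xs ->; rewrite fx_IAk. Qed.

End Helpers.
Arguments D_add {k A phi M1 M2 D}.
Arguments D_0 {k A phi M1 M2 D}.
Arguments D_scal {k A phi M1 M2 D}.
Arguments D_sum {k A phi M1 M2 D}.
Arguments L1 {k A phi M1 M2 D}.
Arguments L2 {k A phi M1 M2 D}.

Theorem mainTheorem20 (k A : comPzRingType) (phi : {rmorphism k -> A})
    (M1 M2 : lmodType A) (N : nat) (D : A -> M1 -> M2) :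
  noetherian_ring k -> noetherian_ring A ->
  fin_gen_module M1 -> fin_gen_module M2 ->
  jet_map phi N D ->
  (* (1) I = ann(M2): D factors through J^N((M1/I^K M1)/k) *)
  (exists K : nat, (0 < K)%N /\
     forall (Q : lmodType A) (q : {linear M1 -> Q}),
       (forall y : Q, exists m, q m = y) ->
       (forall m, q m = 0 <-> ideal_mul_mod (ideal_pow (ann M2) K) m) ->
       exists D' : A -> Q -> M2, jet_map phi N D' /\
         forall a m, D a m = D' a (q m))
  /\
  (* (2) I = ann(M1): the image of D is annihilated by I^K *)
  (exists K : nat, (0 < K)%N /\
     forall x y, ideal_pow (ann M1) K x -> jet_image D y -> x *: y = 0).
Proof.
move=> _ _ _ _ [TL V].
have Vx xs b m : size xs = N.+1 -> tact D (tprod (map (@fx A) xs)) b m = 0.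
  by move=> hs; apply: V; rewrite ?size_map ?all_fx.
split.
- exists N.+1; split => // Q q surj hker.
  have Dz a m : ideal_mul_mod (ideal_pow (ann M2) N.+1) m -> D a m = 0.
    case=> s [hs ->]; rewrite (D_sum TL); apply: big1_seq => p /andP[_ hp].
    have [s' [hs' ->]] := hs p hp.
    rewrite scaler_suml (D_sum TL); apply: big1_seq => t /andP[_ ht].
    have [st ha] := hs' t ht.
    have := Vx t ((-1) ^+ size t * a) p.2 st.
    rewrite (L1 TL) // mulrA -exprMn mulrNN mulr1 expr1n mul1r.
    by move=> ->.
  have Dwd a m m' : q m = q m' -> D a m = D a m'.
    move=> e; rewrite -(subrK m' m) (D_add TL) Dz ?add0r //.
    by apply/hker; rewrite linearB /= e subrr.
  have pick : forall y, {m : M1 | q m == y}.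
    move=> y; apply: sigW; have [m hm] := surj y; by exists m; apply/eqP.
  exists (fun a y => D a (sval (pick y))); split; last first.
    by move=> a m; apply: Dwd; case: (pick (q m)) => m' /= /eqP ->.
  have hp y : q (sval (pick y)) = y by case: (pick y) => m /= /eqP.
  case: TL => T1 T2 T3 T4.
  split; first split.
  + by move=> a a' y; rewrite T1.
  + move=> a y y'; rewrite -T2; apply: Dwd.
    by rewrite linearD /= !hp.
  + move=> l a y; rewrite T3; apply: Dwd.
    by rewrite linearZ /= !hp.
  + by move=> b a y; rewrite T4.
  + move=> ts hs hall b y.
    rewrite /tact.
    transitivity (tact D (tprod ts) b (sval (pick y))); last by apply: V.
    rewrite /tact; apply: eq_bigr => p _; apply: Dwd.
    by rewrite linearZ /= !hp.
- exists N.+1; split => // x y [s [hs ->]] [s' ->].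
  rewrite scaler_suml; apply: big1_seq => t /andP[_ ht].
  rewrite scaler_sumr; apply: big1_seq => p /andP[_ hp].
  have [st ha] := hs t ht.
  by rewrite -(D_scal TL) -(L2 TL) // Vx.
Qed.
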